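(* Let $p/q$ (with $p,q$ coprime positive integers) be a convergent of the simple continued fraction expansion of $e$. (i) If $q>1$ and $S(q)$ denotes the smallest positive integer such that $q$ divides $S(q)!$, then $q^2 < (S(q)+1)!$. (ii) If $n>0$ is an integer and $n! = dq$ for some integer $d$ (i.e. $n!$ is a multiple of $q$), then $d^2 > \dfrac{n!}{n+1}$.
   Context: The convergents of $e$ are the rationals $p_k/q_k$ (in lowest terms, $q_k>0$) obtained by truncating the simple continued fraction expansion of $e$; they begin $2/1, 3/1, 8/3, 11/4, 19/7, 87/32,\dots$. *)

(* Defs.v *)
From HB Require Import structures.
From mathcomp Require Import all_boot all_order all_algebra.
From mathcomp Require Import reals.
From mathcomp Require Import sequences.
From mathcomp.analysis Require Import exp.
Set Implicit Arguments. Unset Strict Implicit. Unset Printing Implicit Defensive.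
Import Order.TTheory GRing.Theory Num.Theory.
Local Open Scope ring_scope.

Section CF.
Variable R : realType.

Fixpoint cf_rem (x : R) (k : nat) : R :=
  match k with
  | O => x
  | k'.+1 => (cf_rem x k' - (Num.floor (cf_rem x k'))%:~R)^-1
  end.

Definition cf_digit (x : R) (k : nat) : int := Num.floor (cf_rem x k).

(* returns ((p_{k-1}, q_{k-1}), (p_k, q_k)) with the standard recurrence
   p_k = a_k p_{k-1} + p_{k-2}, q_k = a_k q_{k-1} + q_{k-2},
   p_{-1} = 1, q_{-1} = 0, p_{-2} = 0, q_{-2} = 1. *)
Fixpoint cf_pq (x : R) (k : nat) : (int * int) * (int * int) :=
  match k with
  | O => ((1, 0), (cf_digit x 0, 1))
  | k'.+1 =>
      let: ((pm, qm), (p, q)) := cf_pq x k' in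
      ((p, q), (cf_digit x k * p + pm, cf_digit x k * q + qm))
  end.

Definition cf_num (x : R) (k : nat) : int := (cf_pq x k).2.1.
Definition cf_den (x : R) (k : nat) : int := (cf_pq x k).2.2.

End CF.

(* Main.v *)
Require Import Defs.
From HB Require Import structures.
From mathcomp Require Import all_boot all_order all_algebra.
From mathcomp Require Import reals.
From mathcomp Require Import sequences.
From mathcomp.analysis Require Import exp.
From mathcomp Require Import classical_sets filter topology normedtype.
From mathcomp Require Import ring lra zify.
Import Order.TTheory GRing.Theory Num.Theory.
Local Open Scope ring_scope.

Definition irr {R : realType} (x : R) :=
  forall a b : int, 0 < b -> x * b%:~R != a%:~R.

Lemma cf_inv (R : realType) (x : R) (Hx : irr x) (k : nat) :
  let pm := (cf_pq x k).1.1 in let qm := (cf_pq x k).1.2 in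
  let p := (cf_pq x k).2.1 in let q := (cf_pq x k).2.2 in
  let y := cf_rem x k.+1 in
  [/\ 1 < y, x * (q%:~R * y + qm%:~R) = p%:~R * y + pm%:~R,
      (p * qm - pm * q) ^+ 2 = 1, 0 < q & 0 <= qm].
Proof.
have remS j : cf_rem x j.+1 = (cf_rem x j - (Num.floor (cf_rem x j))%:~R)^-1 by [].
elim: k => [|k IH].
  rewrite remS /cf_pq /cf_digit /=.
  set a := Num.floor x.
  have Hfl : a%:~R <= x < (a + 1)%:~R by rewrite /a floor_itv.
  have Hne : x - a%:~R != 0.
    rewrite subr_eq0; apply/negP => /eqP E.
    by have := Hx a 1 ltr01; rewrite mulr1 E eqxx.
  have Hpos : 0 < x - a%:~R.
    case/andP: Hfl => H1 _; rewrite lt_def Hne /= subr_ge0 //.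
  have Hlt1 : x - a%:~R < 1.
    case/andP: Hfl => _; rewrite intrD /=; lra.
  split => //.
  - by rewrite -[1 < _]invf_lt1 ?invrK // invr_gt0.
  - rewrite ?mulr0 ?mul1r ?addr0 ?rmorph0 ?rmorph1 ?mul1r ?addr0 ?mulr1z ?mulr0z ?addr0 ?mul1r.
    apply/eqP; rewrite -subr_eq0.
    have -> : x * (x - a%:~R)^-1 - (a%:~R * (x - a%:~R)^-1 + 1)
       = (x - a%:~R) * (x - a%:~R)^-1 - 1 by ring.
    by rewrite mulfV // subrr.
  - by rewrite mulr0 sub0r mulr1 sqrrN expr1n.
have pqS : cf_pq x k.+1 = let: ((pm, qm), (p, q)) := cf_pq x k in
      ((p, q), (cf_digit x k.+1 * p + pm, cf_digit x k.+1 * q + qm)) by [].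
move: IH; rewrite pqS (remS k.+1) /cf_digit.
case: (cf_pq x k) => [[pm qm] [p q]] /= [Hy Hid Hdet Hq Hqm].
rewrite -!remS in Hy Hid *.
set y := cf_rem x k.+1 in Hy Hid *.
set a := Num.floor y.
have Hfl : a%:~R <= y < (a + 1)%:~R by rewrite /a floor_itv.
have Ha1 : 1 <= a by rewrite /a floor_ge_int; apply: ltW.
have Hne : y - a%:~R != 0.
  rewrite subr_eq0; apply/negP => /eqP Ey.
  have Hb : 0 < q * a + qm.
    apply: (@lt_le_trans _ _ (q * a)); last by rewrite lerDl.
    by rewrite mulr_gt0 // (lt_le_trans ltr01).
  have := Hx (p * a + pm) _ Hb; rewrite Ey in Hid.
  by rewrite !rmorphD !rmorphM /= Hid eqxx.
have Hpos : 0 < y - a%:~R.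
  case/andP: Hfl => H1 _; rewrite lt_def Hne /= subr_ge0 //.
have Hlt1 : y - a%:~R < 1.
  case/andP: Hfl => _; rewrite intrD /=; lra.
set y' := (y - a%:~R)^-1.
have Ey' : (y - a%:~R) * y' = 1 by rewrite /y' mulfV.
split.
- by rewrite /y' -[1 < _]invf_lt1 ?invrK // invr_gt0.
- rewrite !rmorphD !rmorphM /=.
  apply/eqP; rewrite -subr_eq0.
  have -> : x * ((a%:~R * q%:~R + qm%:~R) * y' + q%:~R) -
     ((a%:~R * p%:~R + pm%:~R) * y' + p%:~R) =
     y' * (x * (q%:~R * y + qm%:~R) - (p%:~R * y + pm%:~R))
     + (x * q%:~R - p%:~R) * (1 - (y - a%:~R) * y') by ring.
  by rewrite Hid Ey' !subrr !mulr0 addr0.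
- rewrite -Hdet; apply/eqP; rewrite -subr_eq0; apply/eqP; ring.
- apply: (@lt_le_trans _ _ (a * q)); first by rewrite mulr_gt0 // (lt_le_trans ltr01).
  by rewrite lerDl.
- exact: ltW.
Qed.

Lemma cf_approx (R : realType) (x : R) (Hx : irr x) (k : nat) :
  0 < cf_den x k /\ exists p : int,
    `|x * (cf_den x k)%:~R - p%:~R| * (cf_den x k)%:~R < 1.
Proof.
have := @cf_inv R x Hx k; rewrite /cf_den.
case: (cf_pq x k) => [[pm qm] [p q]] /= [Hy Hid Hdet Hq Hqm].
split => //; exists p.
set y := cf_rem x k.+1 in Hy Hid *.
have Hd : `|p * qm - pm * q| = 1 by apply/eqP; rewrite -sqr_norm_eq1 Hdet.
have E : (x * q%:~R - p%:~R) * (q%:~R * y + qm%:~R) = - (p * qm - pm * q)%:~R.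
  rewrite !rmorphB !rmorphM /=.
  apply/eqP; rewrite -subr_eq0 opprK; apply/eqP.
  apply: (@eq_trans _ _ (q%:~R * (x * (q%:~R * y + qm%:~R) - (p%:~R * y + pm%:~R)))); first ring.
  by rewrite Hid subrr mulr0.
have E1 : `|x * q%:~R - p%:~R| * (q%:~R * y + qm%:~R) = 1.
  have Hpos : 0 < q%:~R * y + qm%:~R :> R.
    by rewrite ltr_wpDr ?ler0z // mulr_gt0 ?ltr0z // (lt_trans ltr01).
  by rewrite -(gtr0_norm Hpos) -normrM E normrN -intr_norm Hd.
have Hqr : 0 < q%:~R :> R by rewrite ltr0z.
have Hlt : q%:~R < q%:~R * y + qm%:~R :> R.
  rewrite -[ltLHS]addr0 ltr_leD ?ler0z //.
  by rewrite -[ltLHS]mulr1 ltr_pM2l.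
have Hn : 0 < `|x * q%:~R - p%:~R|.
  rewrite lt_def normr_ge0 andbT; apply/negP => /eqP H0.
  by move: E1; rewrite H0 mul0r => /eqP; rewrite eq_sym oner_eq0.
by rewrite -[X in _ < X]E1 ltr_pM2l.
Qed.

Lemma fact_dvd (i n : nat) : (i <= n)%N -> (i`! %| n`!)%N.
Proof.
elim: n => [|n IH]; first by rewrite leqn0 => /eqP ->.
rewrite leq_eqVlt => /orP [/eqP -> //|]; rewrite ltnS => /IH H.
by rewrite factS dvdn_mull.
Qed.

Section ET.
Variable R : realType.
Let u := exp_coeff (1 : R).

Let uE i : u i = (i`!%:R)^-1.
Proof. by rewrite /u /exp_coeff /= expr1n mul1r. Qed.

Let u_ge0 i : 0 <= u i.
Proof. by rewrite uE invr_ge0 ler0n. Qed.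

Let homo_s : {homo series u : n m / (n <= m)%N >-> n <= m}.
Proof.
move=> a b ab; have := @nondecreasing_series R u xpredT 0 (fun k _ _ => u_ge0 k) a b ab.
by rewrite /series /=.
Qed.

Let s_int n m : (m <= n.+1)%N ->
  series u m * n`!%:R = (\sum_(i < m) (n`! %/ i`!))%:R.
Proof.
elim: m => [|m IH] Hm.
 rewrite big_ord0 /series /= big_geq // mul0r //.
rewrite seriesSr mulrDl IH; last exact: ltnW.
rewrite big_ord_recr natrD /=. congr (_ + _).
rewrite uE natr_div; last first.
  by rewrite unitfE pnatr_eq0 -lt0n fact_gt0.
 exact: fact_dvd.
by rewrite mulrC.
Qed.

Let s_upper n j : series u (n.+1 + j)%N + 2 / (n.+1 + j)%N`!%:R <=
                  series u n.+1 + 2 / n.+1`!%:R.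
Proof.
elim: j => [|j IH]; first by rewrite addn0.
apply: le_trans IH; rewrite addnS seriesSr uE -addrA lerD2l.
set K := (n.+1 + j)%N.
rewrite factS natrM invfM.
have HK : 0 < K`!%:R :> R by rewrite ltr0n fact_gt0.
have HK1 : 2 <= K.+1%:R :> R by rewrite ler_nat.
set a := (K`!%:R)^-1.
have Ha : 0 < a by rewrite invr_gt0.
have Hb : K.+1%:R^-1 <= 2^-1 :> R by rewrite lef_pV2 ?posrE // ltr0n.
rewrite mulrA [2 * _]mulrC.
have : 2 * (K.+1%:R)^-1 * a <= 2 * 2^-1 * a :> R.
  by rewrite ler_pM2r // ler_pM2l.
rewrite divff ?pnatr_eq0 // mul1r [_^-1 * 2]mulrC => H.
have -> : 2 * a = a + a by ring.
by rewrite lerD2l.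
Qed.

Lemma e_tail n : exists M : nat,
  (n.+1%:R)^-1 < n`!%:R * expR (1:R) - M%:R <= 2 / n.+1%:R.
Proof.
exists (\sum_(i < n.+1) (n`! %/ i`!))%N.
rewrite -s_int // [_ * expR _]mulrC -mulrBl.
have Hf : 0 < n`!%:R :> R by rewrite ltr0n fact_gt0.
have Hcv := is_cvg_series_exp_coeff (1:R).
have HnS : n.+1`!%:R = n.+1%:R * n`!%:R :> R by rewrite factS natrM.
have Hn1 : 0 < n.+1%:R :> R by rewrite ltr0n.
apply/andP; split.
- have H3 : series u n.+3 <= expR 1 by apply: nondecreasing_cvgn_le.
  rewrite 2!seriesSr 2!uE in H3.
  have Hp : 0 < (n.+2`!%:R)^-1 :> R by rewrite invr_gt0 ltr0n fact_gt0.
  have : (n.+1%:R)^-1 < (expR 1 - series u n.+1) * n`!%:R.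
    have Hinv : (n.+1`!%:R)^-1 = n.+1%:R^-1 / n`!%:R :> R.
      by rewrite HnS invfM.
    rewrite -ltr_pdivrMr // -Hinv; lra.
  by [].
- have Hle : expR 1 <= series u n.+1 + 2 / n.+1`!%:R.
    apply: limr_le => //; apply: nearW => m.
    case: (leqP m n.+1) => Hm.
      change (series u m <= series u n.+1 + 2 / n.+1`!%:R).
      apply: le_trans (homo_s _ _ Hm) _; rewrite lerDl divr_ge0 // ler0n.
    have := s_upper n (m - n.+1); rewrite subnKC ?(ltnW Hm) //.
    move=> H; change (series u m <= series u n.+1 + 2 / n.+1`!%:R).
    apply: le_trans H; rewrite lerDl divr_ge0 // ler0n.
  have H1 : expR 1 - series u n.+1 <= 2 / n.+1`!%:R by lra.
  have H2 := ler_wpM2r (ltW Hf) H1.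
  have E : 2 / (n.+1%:R * n`!%:R) * n`!%:R = 2 / n.+1%:R :> R.
    by field; rewrite (gt_eqF Hf) andbT addrC natr1 pnatr_eq0.
  rewrite HnS E in H2; exact: H2.
Qed.
End ET.

Lemma natz_r (R : realType) (m : nat) : (m%:Z)%:~R = m%:R :> R.
Proof. by []. Qed.

Lemma e_irr (R : realType) : irr (expR (1:R)).
Proof.
move=> a b Hb; apply/eqP => Heq.
have Hb' : b = (`|b|%N)%:Z by rewrite gez0_abs // ltW.
set B := `|b|%N in Hb'.
have HB : (0 < B)%N by rewrite -(ltz_nat 0) -Hb'.
have [M /andP [H1 H2]] := e_tail R (B + 2)%N.
set n := (B + 2)%N in H1 H2.
have Hd : (B %| n`!)%N by apply: dvdn_fact; rewrite HB /n leq_addr.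
set c := (n`! %/ B)%N.
have Hnc : n`! = (c * B)%N by rewrite /c divnK.
have Ez : n`!%:R * expR 1 - M%:R = (c%:Z * a - M%:Z)%:~R :> R.
  have HBe : expR 1 * B%:R = a%:~R :> R by rewrite -natz_r -Hb'.
  by rewrite Hnc natrM -mulrA [B%:R * _]mulrC HBe rmorphB rmorphM.
rewrite Ez in H1 H2.
have Hn1 : 0 < n.+1%:R :> R by rewrite ltr0n.
have Hpos : 0 < c%:Z * a - M%:Z.
  rewrite -(ltr0z R); apply: lt_trans H1; by rewrite invr_gt0.
have Hlt : (c%:Z * a - M%:Z)%:~R < 1 :> R.
  apply: (le_lt_trans H2); rewrite ltr_pdivrMr // mul1r ltr_nat /n; lia.
move: Hpos; rewrite gtz0_ge1 -(ler_int R) => Hge.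
by have := lt_le_trans Hlt Hge; rewrite ltxx.
Qed.

Lemma core (R : realType) (k q n : nat) :
  cf_den (expR (1 : R)) k = q%:Z -> (0 < n)%N -> (q %| n`!)%N ->
  (q ^ 2 < n.+1`!)%N.
Proof.
move=> Eq Hn Hdv.
have [Hq0 [p Hp]] := @cf_approx R _ (@e_irr R) k.
rewrite Eq natz_r in Hp; rewrite Eq ltz_nat in Hq0.
have Hqn : (q <= n`!)%N by apply: dvdn_leq => //; apply: fact_gt0.
case: (ltnP n 3) => Hn3.
  case: n Hn Hdv Hqn Hn3 => [//|[|[|n]]] //= _ _ Hqn _.
  - have : (q <= 1)%N by []. by case: q Hq0 {Eq Hp Hqn} => [|[|]].
  - have : (q <= 2)%N by []. by case: q Hq0 {Eq Hp Hqn} => [|[|[|]]].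
set d := (n`! %/ q)%N.
have Hnd : n`! = (d * q)%N by rewrite /d divnK.
have [M /andP [H1 H2]] := e_tail R n.
set e := expR (1 : R) in Hp H1 H2 *.
set r := (n.+1%:R)^-1 : R.
rewrite -/r in H1 H2.
have Hn1 : 0 < n.+1%:R :> R by rewrite ltr0n.
have Hr : 0 < r by rewrite invr_gt0.
have Hr3 : 3 * r <= 1.
  rewrite -(ler_pM2r Hn1) mul1r -mulrA mulVf ?gt_eqF // mulr1 ler_nat; lia.
have H2' : n`!%:R * e - M%:R <= 2 * r by [].
set w := n`!%:R * e - (d%:Z * p)%:~R.
have Ew : w = d%:R * (e * q%:R - p%:~R).
  by rewrite /w Hnd natrM rmorphM /= natz_r; ring.
have Hd0 : 0 < d%:R :> R.
  rewrite ltr0n lt0n; apply/eqP => Hd0.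
  by have := fact_gt0 n; rewrite Hnd Hd0 mul0n.
have Hq : 0 < q%:R :> R by rewrite ltr0n.
have Hw : `|w| * q%:R * q%:R < n`!%:R.
  have -> : `|w| * q%:R * q%:R = (d%:R * q%:R) * (`|e * q%:R - p%:~R| * q%:R).
    by rewrite Ew normrM (ger0_norm (ltW Hd0)); ring.
  by rewrite Hnd natrM -[X in _ < X]mulr1 ltr_pM2l // mulr_gt0.
set z := d%:Z * p - M%:Z.
have Ewz : w = (n`!%:R * e - M%:R) - z%:~R.
  by rewrite /w /z rmorphB /= natz_r; ring.
have Hrw : r <= `|w|.
  case: (lerP z 0) => Hz.
    have Hz' : z%:~R <= 0 :> R by rewrite lerz0.
    apply: le_trans (ler_norm w); rewrite Ewz; lra.
  have Hz' : 1 <= z%:~R :> R by rewrite ler1z -gtz0_ge1.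
  rewrite ler_normr; apply/orP; right; rewrite Ewz; lra.
have Hqq : r * (q%:R * q%:R) < n`!%:R.
  apply: le_lt_trans Hw; rewrite mulrA !ler_pM2r //.
have Hqq2 : q%:R * q%:R < n`!%:R * n.+1%:R :> R.
  have -> : q%:R * q%:R = r * (q%:R * q%:R) * n.+1%:R :> R.
    by rewrite /r mulrAC mulVf ?gt_eqF // mul1r.
  by rewrite (ltr_pM2r Hn1).
rewrite -(ltr_nat R) factS natrM natrX expr2 [n.+1%:R * _]mulrC; exact: Hqq2.
Qed.

Theorem lemma2p1 (R : realType) (k : nat) (q : nat)
  (hq : cf_den (expR (1 : R)) k = q%:Z) :
  ((1 < q)%N ->
     forall S : nat, (0 < S)%N -> (q %| S`!)%N ->
       (forall m : nat, (0 < m)%N -> (m < S)%N -> ~~ (q %| m`!)%N) ->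
       (q ^ 2 < S.+1`!)%N)
  /\
  (forall (n : nat) (d : int), (0 < n)%N -> (n`!)%:Z = d * q%:Z ->
     (n`!)%:R / (n.+1)%:R < (d ^+ 2)%:~R :> rat).
Proof.
split.
  by move=> _ S HS Hdv _; exact: (@core R k q S hq HS Hdv).
move=> n d Hn Hf.
have Hdv : (q %| n`!)%N.
  have : (q%:Z %| n`!%:Z)%Z by rewrite Hf dvdz_mull.
  by [].
have H := @core R k q n hq Hn Hdv.
have Hq0 : (0 < q)%N.
  rewrite lt0n; apply/eqP => Hq; move: Hf; rewrite Hq mulr0 => /eqP.
  by rewrite eqz_nat gtn_eqF // fact_gt0.
have Hq2 : (q%:R * q%:R : rat) < n`!%:R * n.+1%:R.
  rewrite -!natrM ltr_nat mulnC -factS -[(q * q)%N]/(q ^ 2)%N; exact: H.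
have HQ : 0 < (q%:R : rat) by rewrite ltr0n.
have HN : 0 < (n`!%:R : rat) by rewrite ltr0n fact_gt0.
have HN1 : 0 < (n.+1%:R : rat) by rewrite ltr0n.
have Hfq : (n`!%:R : rat) = d%:~R * q%:R.
  by change (((n`!)%:Z)%:~R = d%:~R * q%:R :> rat); rewrite Hf rmorphM.
rewrite ltr_pdivrMr // rmorphXn /=.
rewrite -(ltr_pM2r (mulr_gt0 HQ HQ)).
have -> : d%:~R ^+ 2 * n.+1%:R * (q%:R * q%:R) = n`!%:R * (n`!%:R * n.+1%:R) :> rat.
  by rewrite Hfq; ring.
by rewrite ltr_pM2l.
Qed.
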